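(* Let $X,Y$ be topological spaces, $A\subset Y$ a nonempty finite subset, and $C_A^X=X\times A\in M(X,Y)$ the constant multivalued map with value $A$. Then $H_n^M(C_A^X):H_n^M(X)\to H_n^M(Y)$ is the zero homomorphism for every $n>0$.
   Context: A continuous multivalued map $X\to Y$ is a subset $T\subset X\times Y$ such that the restriction of the projection $X\times Y\to X$ to $T$ is proper (universally closed), surjective and has finite fibers; $M(X,Y)$ is the set of these. For $R\in M(X,Y)$, $S\in M(Y,Z)$ the composition $S\circ R\subset X\times Z$ is the image of $(R\times Z)\cap(X\times S)$ under the projection $X\times Y\times Z\to X\times Z$. A continuous single-valued map $f$ is identified with its graph $\mathrm{gr}(f)$. Let $\Delta_n=\{(t_0,\dots,t_n)\in\mathbb{R}^{n+1}: t_i\ge 0,\ \sum t_i=1\}$ and $\delta^n_i:\Delta_{n-1}\to\Delta_n$, $\delta^n_i(t_0,\dots,t_{n-1})=(t_0,\dots,t_{i-1},0,t_i,\dots,t_{n-1})$. Set $S_n^M(X)=M(\Delta_n,X)$, $d^i_n(\alpha)=\alpha\circ\mathrm{gr}(\delta^n_i)$, let $C_n^M(X)$ be the free abelian group on $S_n^M(X)$ with differential $d_n=\sum_{i=0}^n(-1)^i d^i_n$, and $H_n^M(X)=H_n(C_*^M(X))$. For $R\in M(X,Y)$, $H_n^M(R)$ is induced by the chain map $\alpha\mapsto R\circ\alpha$. *)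

(* Defs.v *)
From HB Require Import structures.
From mathcomp Require Import all_boot all_order all_algebra.
From mathcomp Require Import all_classical all_reals all_analysis.
From mathcomp Require Import subtype_topology.
Unset Printing Implicit Defensive.
Import Order.TTheory GRing.Theory Num.Theory.
Import numFieldNormedType.Exports.
Local Open Scope classical_set_scope.
Local Open Scope ring_scope.

(* The projection T -> X (T with the subspace topology of X * Y) is
   universally closed: for every space Z, the map T * Z -> X * Z is closed.
   Closed subsets of T * Z are exactly the traces D `&` (T * Z) of closed
   subsets D of (X * Y) * Z. *)
Definition univ_closed_proj {X Y : topologicalType} (T : set (X * Y)) : Prop :=
  forall (Z : topologicalType) (D : set ((X * Y) * Z)), closed D ->
    closed [set xz : X * Z | exists y : Y, T (xz.1, y) /\ D ((xz.1, y), xz.2)].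

Definition is_mvmap {X Y : topologicalType} (T : set (X * Y)) : Prop :=
  [/\ univ_closed_proj T,
      (forall x : X, exists y : Y, T (x, y)) &
      (forall x : X, finite_set [set y : Y | T (x, y)])].

Definition mvcomp {X Y Z : Type} (R : set (X * Y)) (S : set (Y * Z)) : set (X * Z) :=
  [set xz | exists y : Y, R (xz.1, y) /\ S (y, xz.2)].

Definition graph {X Y : Type} (f : X -> Y) : set (X * Y) := [set xy | xy.2 = f xy.1].

Definition constmv {X Y : Type} (A : set Y) : set (X * Y) := [set xy | A xy.2].

Definition simplex_set (R : realType) (n : nat) : set 'rV[R]_(n.+1) :=
  [set t | (forall i, 0 <= t ord0 i) /\ \sum_(i < n.+1) t ord0 i = 1].

Definition Simplex (R : realType) (n : nat) : topologicalType :=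
  set_type (simplex_set R n).

Definition face_vec {R : realType} {n : nat} (i : nat) (t : 'rV[R]_(n.+1)) : 'rV[R]_(n.+2) :=
  \row_(j < n.+2) (if (j < i)%N then t ord0 (inord j)
                   else if j == i :> nat then 0 else t ord0 (inord j.-1)).

Definition face_graph (R : realType) (n i : nat) : set (Simplex R n * Simplex R n.+1) :=
  [set st | set_val st.2 = face_vec i (set_val st.1)].

Definition Sing (R : realType) (X : topologicalType) (n : nat) : set (set (Simplex R n * X)) :=
  [set a | is_mvmap a].

Definition is_chain {R : realType} {X : topologicalType} {n : nat}
    (c : set (Simplex R n * X) -> int) : Prop :=
  finite_set [set a | c a != 0] /\ [set a | c a != 0] `<=` Sing R X n.

Definition face {R : realType} {X : topologicalType} {n : nat} (i : nat)
    (a : set (Simplex R n.+1 * X)) : set (Simplex R n * X) :=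
  mvcomp (face_graph R n i) a.

Definition bdry {R : realType} {X : topologicalType} {n : nat}
    (c : set (Simplex R n.+1 * X) -> int) : set (Simplex R n * X) -> int :=
  fun b => \sum_(a \in [set a | c a != 0])
             \sum_(i < n.+2) (c a * (-1) ^+ i * (face i a == b)%:R).

Definition push {R : realType} {X Y : topologicalType} {n : nat} (T : set (X * Y))
    (c : set (Simplex R n * X) -> int) : set (Simplex R n * Y) -> int :=
  fun b => \sum_(a \in [set a | c a != 0]) (c a * (mvcomp a T == b)%:R).

(* H_n^M(T) is zero for n = m+1: every cycle is sent to a boundary *)
Definition homology_map_zero (R : realType) {X Y : topologicalType} (m : nat)
    (T : set (X * Y)) : Prop :=
  forall c : set (Simplex R m.+1 * X) -> int,
    is_chain c -> bdry c = (fun _ => 0) ->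
    exists e : set (Simplex R m.+2 * Y) -> int,
      is_chain e /\ bdry e = push T c.

(* Main.v *)
Require Import Defs.
From HB Require Import structures.
From mathcomp Require Import all_boot all_order all_algebra.
From mathcomp Require Import all_classical all_reals all_analysis.
Import Order.TTheory GRing.Theory Num.Theory.
Local Open Scope classical_set_scope.
Local Open Scope ring_scope.

Lemma cont_ins (X Y Z : topologicalType) (y : Y) :
  continuous (fun xz : X * Z => ((xz.1, y), xz.2)).
Proof.
move=> x.
have h1 : (fun xz : X * Z => (xz.1, y)) @ x --> (x.1, y).
  apply: cvg_pair; [exact: cvg_fst | exact: cvg_cst].
have h2 : (fun xz : X * Z => xz.2) @ x --> x.2 by exact: cvg_snd.
have := cvg_pair h1 h2.
exact.
Qed.

Lemma const_mv (X Y : topologicalType) (A : set Y) :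
  A !=set0 -> finite_set A -> is_mvmap (constmv (X:=X) A).
Proof.
move=> A0 Afin; split.
- move=> Z D cD.
  have -> : [set xz : X * Z | exists y : Y, constmv A (xz.1, y) /\ D ((xz.1, y), xz.2)]
     = \bigcup_(y in A) ((fun xz : X * Z => ((xz.1, y), xz.2)) @^-1` D).
    by apply/seteqP; split => [xz [y [Ay Dy]]|xz [y Ay Dy]]; exists y.
  apply: closed_bigcup => // y _; apply: preimage_closed => // xz _.
  exact: cont_ins.
- by move=> x; case: A0 => y Ay; exists y.
- by move=> x; rewrite /constmv /=.
Qed.

Lemma comp_const (X Y Z : Type) (a : set (X * Y)) (A : set Z) :
  (forall x, exists y, a (x, y)) -> mvcomp a (constmv A) = constmv A.
Proof.
move=> sa; apply/seteqP; split => [[x z] [y [_ Az]] //|[x z] Az].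
by case: (sa x) => y ay; exists y.
Qed.

Lemma face_vec_simplex (R : realType) (n i : nat) (t : 'rV[R]_(n.+1)) :
  (i < n.+2)%N -> simplex_set R n t -> simplex_set R n.+1 (face_vec i t).
Proof.
move=> hi [h1 h2]; split.
- move=> j; rewrite /face_vec mxE; case: ifP => _; first exact: h1.
  by case: ifP => _.
- rewrite -h2 (bigD1_ord (Ordinal hi)) //= mxE ltnn eqxx add0r.
  apply: eq_bigr => k _; rewrite mxE /= /bump.
  have [hk|hk] := leqP i k.
    rewrite add1n ltnNge (leqW hk) /= gtn_eqF //=.
    by congr (t ord0 _); apply: val_inj; rewrite /= inordK.
  rewrite add0n hk; congr (t ord0 _); apply: val_inj; rewrite /= inordK //.
Qed.

Lemma face_const (R : realType) (Y : topologicalType) (A : set Y) (n : nat)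
  (i : 'I_n.+2) : face i (constmv (X:=Simplex R n.+1) A) = constmv A.
Proof.
apply/seteqP; split => [[s y] [t [_ Ay]] //|[s y] Ay].
have hs : face_vec i (set_val s) \in simplex_set R n.+1.
  by apply/mem_set/face_vec_simplex => //; exact: set_valP.
by exists (@exist _ (fun x => x \in simplex_set R n.+1) _ hs : Simplex R n.+1).
Qed.

Lemma alt_sum n : \sum_(i < n) (-1 : int) ^+ i = (odd n)%:R.
Proof.
elim: n => [|n IH]; first by rewrite big_ord0.
rewrite big_ord_recr /= IH -signr_odd; case: (odd n) => /=.
  by rewrite expr1 addrN.
by rewrite expr0 add0r.
Qed.

Lemma sum_eq_uniq (T : eqType) (r : seq T) x :
  uniq r -> x \in r -> \sum_(b <- r) ((x == b)%:R : int) = 1.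
Proof.
move=> ur xr.
have -> : \sum_(b <- r) ((x == b)%:R : int) = (count_mem x r)%:R.
  elim: (r) => [|y r' IH]; first by rewrite big_nil.
  by rewrite big_cons IH /= natrD eq_sym.
by rewrite count_uniq_mem // xr.
Qed.

Theorem mainTheorem5 (R : realType) (X Y : topologicalType) (A : set Y) :
  A !=set0 -> finite_set A ->
  forall m : nat, homology_map_zero R m (constmv (X := X) A).
Proof.
move=> A0 Afin m c [cfin csing] cyc.
set S := [set a | c a != 0].
pose eps := \sum_(a \in S) c a.
have peq : push (constmv A) c = fun b => eps * (constmv A == b)%:R.
  apply: funext => b; rewrite /push mulr_fsuml; apply: eq_fsbigr => a Sa.
  rewrite comp_const //.
  by have [_ ? _] := csing a (set_mem Sa).
have [mo|me] := boolP (odd m).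
- have eps0 : eps = 0.
    pose s : seq (set (Simplex R m.+1 * X)) := finmap.enum_fset (fset_set S).
    pose r := undup [seq face (nat_of_ord i) (a : set (Simplex R m.+1 * X)) | a <- s, i <- enum 'I_(m.+2)].
    have : \sum_(b <- r) bdry c b = 0 by rewrite big1 // => b _; rewrite cyc.
    rewrite /bdry; under eq_bigr do rewrite fsbig_finite //.
    rewrite exchange_big /= /eps fsbig_finite // => H; apply: (etrans _ H).
    rewrite big_seq [RHS]big_seq; apply: eq_bigr => a ha.
    rewrite exchange_big /=.
    rewrite (eq_bigr (fun i : 'I_m.+2 => c a * (-1) ^+ i)); last first.
      move=> i _; rewrite -big_distrr /= sum_eq_uniq ?undup_uniq ?mulr1 //.
      by rewrite mem_undup; apply: allpairs_f => //; rewrite mem_enum.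
    by rewrite -big_distrr /= alt_sum /= mo mulr1.
  exists (fun _ => 0); split.
    split; last by move=> a /= /negP; case.
    apply: (sub_finite_set (B:=set0)); last exact: finite_set0.
    by move=> a /= /negP; case.
  apply: funext => b; rewrite peq eps0 mul0r /bdry.
  by rewrite fsbig1 // => a _; rewrite big1 // => i _; rewrite !mul0r.
- set K := constmv (X:=Simplex R m.+2) A.
  have sub : [set a | eps * (K == a)%:R != 0] `<=` [set K].
    by move=> a /=; have [->//|_] := eqVneq K a; rewrite mulr0 eqxx.
  exists (fun a => eps * (K == a)%:R); split.
    split; first exact: sub_finite_set sub (finite_set1 K).
    by move=> a /sub ->; exact: const_mv.
  apply: funext => b; rewrite peq /bdry.
  have [->|e0] := eqVneq eps 0.
    by rewrite mul0r fsbig1 // => a /=; rewrite mul0r eqxx.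
  rewrite (_ : [set a | _ != 0] = [set K]); last first.
    by apply/seteqP; split => [a /sub //|a ->]; rewrite /= eqxx mulr1.
  rewrite fsbig_set1 eqxx mulr1.
  under eq_bigr => i _ do rewrite face_const.
  by rewrite -big_distrl -big_distrr /= alt_sum /= (negbTE me) mulr1.
Qed.
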